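(* Let $N\ge1$, let $f:\{0,1\}^N\to\{-1,1\}$, and suppose a quantum query algorithm computes $f$ with error probability at most $\epsilon$ using $T$ queries. Then for every positive odd integer $k$, $$T\;\ge\;\frac12\left[1-\sqrt[k]{\frac{1+2\sqrt{\epsilon}}{2}+\frac{1-2\sqrt{\epsilon}}{2}\sum_{s\in\{0,1\}^N}\hat f_s^{\,2}\,(1-2\lambda_s)^k}\right]N .$$
   Context: Quantum query model: the input $x=(x_0,\dots,x_{N-1})\in\{0,1\}^N$ is accessible only through an oracle. The algorithm works in a Hilbert space with basis states $|i\rangle_I|a\rangle_A|w\rangle_W|r\rangle_R$ (index register $i\in\{0,\dots,N-1\}$, one-bit answer register $a$, a working register $w$ of fixed size, and a one-bit result register $r$). An algorithm with $T$ queries is a sequence $U_0, O_x, U_1, O_x,\dots,O_x,U_T$ of unitaries, where the $U_j$ are arbitrary unitaries independent of $x$ and the query gate is $O_x:|i\rangle|a\rangle|w\rangle|r\rangle\mapsto|i\rangle|a\oplus x_i\rangle|w\rangle|r\rangle$. It starts from a fixed basis state, and at the end the result register is measured. It computes $f$ with error probability at most $\epsilon$ if for every $x$ the measured result equals $f(x)$ with probability at least $1-\epsilon$. Fourier coefficients: $\hat f_s=E_x\big[f(x)(-1)^{s\cdot x}\big]$ for $s\in\{0,1\}^N$, $x$ uniform in $\{0,1\}^N$, $s\cdot x=\sum_i s_ix_i$. For $s\in\{0,1\}^N$, $|s|$ is the number of ones in $s$ and $\lambda_s=|s|/N$. The $k$-th root is the real $k$-th root. *)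

(* Defs.v *)
From HB Require Import structures.
From mathcomp Require Import all_boot all_order all_algebra.
From mathcomp Require Import complex.
From mathcomp Require Import reals exp.
Unset Printing Implicit Defensive.
Import Order.TTheory GRing.Theory Num.Theory.
Local Open Scope ring_scope.

Section Quantum.
Variable R : realType.
Local Notation C := R[i].

(* Inputs x in {0,1}^N, bits represented by bool (true = 1). *)
Definition input (N : nat) := {ffun 'I_N -> bool}.

(* Basis states |i>_I |a>_A |w>_W |r>_R ; the working register has m states. *)
Definition basis (N m : nat) : finType := ('I_N * bool * 'I_m * bool)%type.

Definition bidx {N m} (b : basis N m) : 'I_N := b.1.1.1.
Definition bans {N m} (b : basis N m) : bool := b.1.1.2.
Definition bwork {N m} (b : basis N m) : 'I_m := b.1.2.
Definition bres {N m} (b : basis N m) : bool := b.2.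

Definition op (B : finType) := B -> B -> C.

Definition unitary {B : finType} (U : op B) : Prop :=
  forall i j : B, \sum_(k : B) (U k i)^* * U k j = (i == j)%:R.

Definition apply {B : finType} (U : op B) (psi : B -> C) : B -> C :=
  fun i => \sum_(j : B) U i j * psi j.

Definition oracle_map {N m} (x : input N) (b : basis N m) : basis N m :=
  (bidx b, xorb (bans b) (x (bidx b)), bwork b, bres b).

Definition oracle {N m} (x : input N) : op (basis N m) :=
  fun b b' => (b == oracle_map x b')%:R.

Definition ket {B : finType} (b0 : B) : B -> C := fun b => (b == b0)%:R.

Record algorithm (N T : nat) := Algorithm {
  wsize : nat;
  gates : 'I_T.+1 -> op (basis N wsize);
  gates_unitary : forall j, unitary (gates j);
  start : basis N wsize
}.
Arguments wsize {N T}.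
Arguments gates {N T}.
Arguments start {N T}.

Fixpoint state_upto {N T} (A : algorithm N T) (x : input N) (t : nat)
  : basis N (wsize A) -> C :=
  match t with
  | 0 => apply (gates A (inord 0)) (ket (start A))
  | t'.+1 => apply (gates A (inord t'.+1))
               (apply (oracle x) (@state_upto N T A x t'))
  end.

Definition final_state {N T} (A : algorithm N T) (x : input N) :=
  state_upto A x T.

Definition sqnorm (z : C) : R := complex.Re z ^+ 2 + complex.Im z ^+ 2.

Definition prob_result {N T} (A : algorithm N T) (x : input N) (r : bool) : R :=
  \sum_(b : basis N (wsize A) | bres b == r) sqnorm (final_state A x b).

(* Result bit r encodes the value (-1)^r in {-1,1}. *)
Definition sign_of_bit (r : bool) : R := if r then -1 else 1.

Definition computes_with_error {N T} (A : algorithm N T)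
  (f : input N -> R) (eps : R) : Prop :=
  forall x : input N,
    \sum_(r : bool | sign_of_bit r == f x) prob_result A x r >= 1 - eps.

Definition dotp {N} (s x : input N) : nat := \sum_(i < N) (s i && x i).
Definition fourier {N} (f : input N -> R) (s : input N) : R :=
  (2 ^+ N)^-1 * \sum_(x : input N) f x * (-1) ^+ dotp s x.
Definition weight {N} (s : input N) : nat := #|[pred i | s i]|.
Definition lambda {N} (s : input N) : R := (weight s)%:R / N%:R.

Definition realroot (k : nat) (x : R) : R :=
  Num.sg x * powR `|x| (k%:R)^-1.

End Quantum.

Arguments computes_with_error {R N T}.
Arguments prob_result {R N T}.
Arguments final_state {R N T}.
Arguments fourier {R N}.
Arguments lambda {R N}.
Arguments realroot {R}.

(* Main.v *)
Require Import Defs.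
From HB Require Import structures.
From mathcomp Require Import all_boot all_order all_algebra.
From mathcomp Require Import complex.
From mathcomp Require Import reals exp.
From mathcomp Require Import ring lra.
Import Order.TTheory GRing.Theory Num.Theory.
Local Open Scope ring_scope.

Section Fourier.
Variable F : numFieldType.
Variable N : nat.

Definition chi (s x : input N) : F := (-1) ^+ dotp s x.
Definition bxor (s t : input N) : input N := [ffun j => s j (+) t j].
Definition zeroi : input N := [ffun => false].
Definition ei (i : 'I_N) : input N := [ffun j => j == i].
Fixpoint K (k : nat) (x y : input N) : F :=
  if k is k'.+1 then N%:R^-1 * \sum_(i < N) K k' (bxor x (ei i)) y
  else (x == y)%:R.
Definition mu (s : input N) : F := N%:R^-1 * \sum_(i < N) (-1) ^+ (s i).
Definition fhat (g : input N -> F) (s : input N) : F :=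
  (2 ^+ N)^-1 * \sum_x g x * chi s x.

Lemma chi_prod s x : chi s x = \prod_(i < N) (-1) ^+ (s i && x i).
Proof.
rewrite /chi /dotp.
exact: (big_morph (fun n : nat => (-1 : F) ^+ n) (fun a b => exprD _ a b) (expr0 _)).
Qed.

Lemma chiC s x : chi s x = chi x s.
Proof. by rewrite !chi_prod; apply: eq_bigr => i _; rewrite andbC. Qed.

Lemma chiM s t x : chi s x * chi t x = chi (bxor s t) x.
Proof.
rewrite !chi_prod -big_split /=; apply: eq_bigr => i _.
by rewrite ffunE; case: (s i); case: (t i); case: (x i); rewrite /= ?expr0 ?expr1 ?mulr1 ?mul1r ?mulrNN ?mulr1.
Qed.

Lemma chiMr s x y : chi s x * chi s y = chi s (bxor x y).
Proof. by rewrite !(chiC s) chiM. Qed.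

Lemma chi_ei s i : chi s (ei i) = (-1) ^+ (s i).
Proof.
rewrite chi_prod (bigD1 i) //= big1 ?mulr1; first by rewrite ffunE eqxx andbT.
by move=> j /negbTE hj; rewrite ffunE hj andbF.
Qed.

Lemma chi0 x : chi zeroi x = 1.
Proof. by rewrite chi_prod big1 // => i _; rewrite ffunE. Qed.

Lemma sum_chi s : \sum_x chi s x = if s == zeroi then 2 ^+ N else 0.
Proof.
under eq_bigr do rewrite chi_prod.
rewrite -(bigA_distr_bigA (fun (i : 'I_N) (b : bool) => (-1 : F) ^+ (s i && b))) /=.
under eq_bigr do rewrite big_bool /= andbF andbT expr0.
case: eqP => [->|hs].
  by rewrite (eq_bigr (fun _ => 2)) ?prodr_const ?card_ord // => i _; rewrite ffunE.
have [i hi] : exists i, s i.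
  case: (pickP (fun i => s i)) => [i hi|h]; first by exists i.
  exfalso; apply: hs; apply/ffunP => j.
  by rewrite ffunE; apply: h.
by rewrite (bigD1 i) //= hi expr1 addNr mul0r.
Qed.

Lemma bxor_eq0 s t : (bxor s t == zeroi) = (s == t).
Proof.
apply/eqP/eqP => [h|->].
  apply/ffunP => j; move/ffunP: h => /(_ j); rewrite !ffunE.
  by case: (s j); case: (t j).
by apply/ffunP => j; rewrite !ffunE addbb.
Qed.

Lemma two_neq0 : (2 : F) ^+ N != 0.
Proof. by rewrite expf_neq0 // pnatr_eq0. Qed.

Lemma fhat_inv g x : g x = \sum_s fhat g s * chi s x.
Proof.
rewrite /fhat.
under eq_bigr do rewrite big_distrr /= big_distrl /=.
rewrite exchange_big /=.
rewrite (eq_bigr (fun y => (2 ^+ N)^-1 * (g y * (if y == x then 2 ^+ N else 0)))); last first.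
  move=> y _; rewrite -bxor_eq0 -sum_chi !big_distrr /=; apply: eq_bigr => s _.
  by rewrite -!mulrA chiMr chiC.
rewrite (bigD1 x) //= eqxx big1 ?addr0.
  by rewrite mulrCA mulVf ?two_neq0 ?mulr1.
by move=> y /negbTE ->; rewrite !mulr0.
Qed.


Lemma sum_delta x (h : input N -> F) : \sum_y (x == y)%:R * h y = h x.
Proof.
rewrite (bigD1 x) //= eqxx mul1r big1 ?addr0 // => y hy.
by rewrite eq_sym (negbTE hy) mul0r.
Qed.

Lemma chi_flip s x i : chi s (bxor x (ei i)) = chi s x * (-1) ^+ (s i).
Proof. by rewrite -chiMr chi_ei. Qed.

Lemma K_eigen k x s : \sum_y K k x y * chi s y = mu s ^+ k * chi s x.
Proof.
elim: k x => [|k IH] x /=; first by rewrite sum_delta expr0 mul1r.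
under eq_bigr do rewrite -mulrA big_distrl /=.
rewrite -big_distrr /= exchange_big /=.
under eq_bigr do rewrite IH chi_flip.
rewrite /mu exprS -!mulrA; congr (_ * _).
rewrite big_distrr /= big_distrl /=; apply: eq_bigr => i _.
by rewrite mulrA mulrC.
Qed.

Lemma core k g h :
  (2 ^+ N)^-1 * \sum_x g x * \sum_y K k x y * h y
  = \sum_s fhat g s * fhat h s * mu s ^+ k.
Proof.
have E : forall x, \sum_y K k x y * h y = \sum_s fhat h s * mu s ^+ k * chi s x.
  move=> x.
  under eq_bigr do rewrite (fhat_inv h) big_distrr /=.
  rewrite exchange_big /=; apply: eq_bigr => s _.
  under eq_bigr do rewrite mulrCA.
  by rewrite -big_distrr /= K_eigen mulrA.
under eq_bigr do rewrite E big_distrr /=.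
rewrite exchange_big big_distrr /=; apply: eq_bigr => s _.
rewrite -(mulrA (fhat g s)).
set A := fhat h s * _.
rewrite /fhat -mulrA big_distrl /=.
congr (_ * _); apply: eq_bigr => x _.
by rewrite [A * _]mulrC mulrA.
Qed.

Lemma sum_sign (s : input N) : \sum_(i < N) (-1 : F) ^+ (s i) = N%:R - 2 * (weight s)%:R.
Proof.
have E : forall b : bool, (-1 : F) ^+ b = 1 - 2 * (if b then 1 else 0).
  by case; rewrite /= ?expr0 ?expr1; ring.
under eq_bigr do rewrite E.
rewrite sumrB sumr_const card_ord -mulr_sumr -big_mkcond /= sumr_const.
by rewrite /weight.
Qed.

Lemma mu_weight (s : input N) : (0 < N)%N -> mu s = 1 - 2 * (weight s)%:R / N%:R.
Proof.
move=> hN; rewrite /mu sum_sign mulrBr mulVf ?pnatr_eq0 -?lt0n //.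
by rewrite mulrC.
Qed.

Lemma weight0 : weight zeroi = 0%N.
Proof. by rewrite /weight; apply: eq_card0 => i; rewrite !inE /= ffunE. Qed.

Lemma K_sum1 k x : (0 < N)%N -> \sum_y K k x y = 1.
Proof.
move=> hN; have := K_eigen k x zeroi.
rewrite chi0 mulr1 mu_weight // weight0 mulr0 mul0r subr0 expr1n.
by under eq_bigr do rewrite chi0 mulr1.
Qed.


Lemma K_ge0 k x y : 0 <= K k x y.
Proof.
elim: k x => [|k IH] x /=; first by rewrite ler0n.
by rewrite mulr_ge0 ?invr_ge0 ?ler0n // sumr_ge0.
Qed.

Definition deg_le (d : nat) (g : input N -> F) :=
  forall s, (d < weight s)%N -> fhat g s = 0.

Lemma fhat_const a s : fhat (fun _ => a) s = a * (s == zeroi)%:R.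
Proof.
rewrite /fhat -big_distrr /= sum_chi; case: eqP => _; last by rewrite !mulr0.
by rewrite mulrCA mulVf ?two_neq0 // !mulr1.
Qed.

Lemma fhat_add g h s : fhat (fun x => g x + h x) s = fhat g s + fhat h s.
Proof.
by rewrite /fhat -mulrDr -big_split /=; congr (_ * _); apply: eq_bigr => x _; rewrite mulrDl.
Qed.

Lemma fhat_scale a g s : fhat (fun x => a * g x) s = a * fhat g s.
Proof.
rewrite /fhat mulrCA; congr (_ * _); rewrite big_distrr /=; apply: eq_bigr => x _.
by rewrite mulrA.
Qed.

Lemma fhat_sum (I : finType) (G : I -> input N -> F) s :
  fhat (fun x => \sum_j G j x) s = \sum_j fhat (G j) s.
Proof.
rewrite /fhat -big_distrr /=; congr (_ * _).
under eq_bigr do rewrite big_distrl /=.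
by rewrite exchange_big.
Qed.

Lemma fhat_mulchi g e s : fhat (fun x => g x * chi e x) s = fhat g (bxor e s).
Proof.
by rewrite /fhat; congr (_ * _); apply: eq_bigr => x _; rewrite -mulrA chiM.
Qed.

Lemma weight_bxor i s : (weight s <= (weight (bxor (ei i) s)).+1)%N.
Proof.
rewrite /weight.
have sub : [pred j | s j] \subset [predU1 i & [pred j | bxor (ei i) s j]].
  apply/subsetP => j; rewrite !inE /= !ffunE.
  by case: eqP => //= _ ->.
apply: (leq_trans (subset_leq_card sub)).
rewrite cardU1; case: (i \in _) => //=.
Qed.

Lemma deg_le_mono d d' g : (d <= d')%N -> deg_le d g -> deg_le d' g.
Proof. by move=> hd h s hs; apply: h; apply: leq_ltn_trans hs. Qed.

Lemma deg_le_const a : deg_le 0 (fun _ => a).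
Proof.
move=> s hs; rewrite fhat_const; case: eqP => [E|]; last by rewrite mulr0.
by move: hs; rewrite E weight0.
Qed.

Lemma deg_le_add d g h : deg_le d g -> deg_le d h -> deg_le d (fun x => g x + h x).
Proof. by move=> hg hh s hs; rewrite fhat_add hg ?hh ?addr0. Qed.

Lemma deg_le_scale d a g : deg_le d g -> deg_le d (fun x => a * g x).
Proof. by move=> hg s hs; rewrite fhat_scale hg ?mulr0. Qed.

Lemma deg_le_sum d (I : finType) (G : I -> input N -> F) :
  (forall j, deg_le d (G j)) -> deg_le d (fun x => \sum_j G j x).
Proof. by move=> hG s hs; rewrite fhat_sum big1 // => j _; apply: hG. Qed.

Lemma deg_le_mulchi d g i : deg_le d g -> deg_le d.+1 (fun x => g x * chi (ei i) x).
Proof.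
move=> hg s hs; rewrite fhat_mulchi; apply: hg.
by rewrite -ltnS; apply: leq_trans hs (weight_bxor i s).
Qed.

Lemma deg_le_ext d g h : (forall x, g x = h x) -> deg_le d g -> deg_le d h.
Proof.
move=> E hg s hs; rewrite -(hg s hs) /fhat; congr (_ * _).
by apply: eq_bigr => x _; rewrite E.
Qed.

End Fourier.

Section Morph.
Variables (F1 F2 : numFieldType) (phi : {rmorphism F1 -> F2}) (N : nat).

Lemma chi_morph (s x : input N) : phi (chi F1 N s x) = chi F2 N s x.
Proof. by rewrite /chi rmorphXn rmorphN1. Qed.

Lemma K_morph k (x y : input N) : phi (K F1 N k x y) = K F2 N k x y.
Proof.
elim: k x => [|k IH] x /=; first by rewrite rmorph_nat.
rewrite rmorphM fmorphV rmorph_nat rmorph_sum; congr (_ * _).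
by apply: eq_bigr => i _; rewrite IH.
Qed.

Lemma mu_morph (s : input N) : phi (mu F1 N s) = mu F2 N s.
Proof.
rewrite rmorphM fmorphV rmorph_nat rmorph_sum; congr (_ * _).
by apply: eq_bigr => i _; rewrite rmorphXn rmorphN1.
Qed.

Lemma fhat_morph (g : input N -> F1) s : phi (fhat F1 N g s) = fhat F2 N (fun x => phi (g x)) s.
Proof.
rewrite /fhat rmorphM fmorphV rmorphXn rmorph_nat rmorph_sum; congr (_ * _).
by apply: eq_bigr => x _; rewrite rmorphM chi_morph.
Qed.
End Morph.


Section Quantum2.
Variable R : realType.
Local Notation C := R[i].
Local Notation RC := (real_complex R).
Local Notation sqnorm := (sqnorm R).
Local Notation apply := (apply R).
Local Notation unitary := (unitary R).
Local Notation oracle := (oracle R).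
Local Notation ket := (ket R).
Local Notation state_upto := (state_upto R).
Local Notation gates := (Defs.gates R _ _).

Lemma sum_deltaT {T : finType} {F : pzRingType} (x : T) (h : T -> F) :
  \sum_y (x == y)%:R * h y = h x.
Proof.
rewrite (bigD1 x) //= eqxx mul1r big1 ?addr0 // => y hy.
by rewrite eq_sym (negbTE hy) mul0r.
Qed.

Definition rip (u v : C) : R := complex.Re u * complex.Re v + complex.Im u * complex.Im v.

Lemma Re_conjM (u v : C) : complex.Re (u^* * v) = rip u v.
Proof. by case: u => a b; case: v => c d; rewrite /rip /=; ring. Qed.

Lemma sqnormC (z : C) : RC (sqnorm z) = z^* * z.
Proof.
case: z => a b; rewrite /sqnorm /=; apply/eqP; rewrite eq_complex /=; apply/andP; split; apply/eqP; ring.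
Qed.

Lemma sqnormC' (z : C) : (real_complex R : {rmorphism R -> C}) (sqnorm z) = z^* * z.
Proof. exact: sqnormC. Qed.

Lemma rip_sq z : rip z z = sqnorm z.
Proof. by rewrite /rip /sqnorm !expr2. Qed.

Lemma ReD (u v : C) : complex.Re (u + v) = complex.Re u + complex.Re v.
Proof. by case: u => a b; case: v => c d. Qed.

Lemma Re0 : complex.Re (0 : C) = 0.
Proof. by []. Qed.

Lemma Re_sum (I : finType) (G : I -> C) : complex.Re (\sum_i G i) = \sum_i complex.Re (G i).
Proof. exact: (big_morph _ ReD Re0). Qed.

Lemma Re_RCM r (z : C) : complex.Re (RC r * z) = r * complex.Re z.
Proof. by case: z => a b /=; ring. Qed.

Lemma Re_RC r : complex.Re (RC r) = r.
Proof. by []. Qed.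

Definition nrm {B : finType} (phi : B -> C) := \sum_b (phi b)^* * phi b.

Lemma nrm_apply {B : finType} (U : op R B) phi : unitary U -> nrm (apply U phi) = nrm phi.
Proof.
move=> hU; rewrite /nrm /apply.
transitivity (\sum_i \sum_j \sum_k ((U i j)^* * U i k) * ((phi j)^* * phi k)).
  apply: eq_bigr => i _; rewrite rmorph_sum big_distrl /=; apply: eq_bigr => j _.
  rewrite big_distrr /=; apply: eq_bigr => k _; rewrite rmorphM; ring.
rewrite exchange_big /=; apply: eq_bigr => j _.
rewrite exchange_big /=.
under eq_bigr do rewrite -big_distrl /= hU.
by rewrite sum_deltaT.
Qed.

Lemma om_inv {N m} (x : input N) : involutive (@oracle_map N m x).
Proof.
by case=> [[[i a] w] r]; rewrite /oracle_map /bidx /bans /bwork /bres /=; case: (x i); case: a.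
Qed.

Lemma apply_oracle {N m} (x : input N) (phi : basis N m -> C) b :
  apply (oracle x) phi b = phi (oracle_map x b).
Proof.
rewrite /apply /oracle.
rewrite (eq_bigr (fun j => ((oracle_map x b == j)%:R : C) * phi j)); first by rewrite sum_deltaT.
move=> j _; have -> : (b == oracle_map x j) = (oracle_map x b == j) => //; apply/idP/idP => /eqP E; apply/eqP; [by rewrite E om_inv | by rewrite -E om_inv].
Qed.

Lemma nrm_oracle {N m} (x : input N) (phi : basis N m -> C) :
  nrm (apply (oracle x) phi) = nrm phi.
Proof.
rewrite /nrm; under eq_bigr do rewrite apply_oracle.
by rewrite [RHS](reindex_inj (can_inj (om_inv x))).
Qed.

Lemma nrm_ket {B : finType} (b0 : B) : nrm (ket b0) = 1.
Proof.
rewrite /nrm /ket (bigD1 b0) //= eqxx rmorph1 mulr1 big1 ?addr0 // => b /negbTE ->.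
by rewrite mulr0.
Qed.

Lemma nrm_state {N T} (A : algorithm R N T) x t : nrm (state_upto A x t) = 1.
Proof.
elim: t => [|t IH] /=; first by rewrite nrm_apply; [exact: nrm_ket | exact: gates_unitary].
by rewrite nrm_apply ?nrm_oracle //; exact: gates_unitary.
Qed.


Lemma deg_le_lin d N (g h : input N -> C) a c :
  deg_le C N d g -> deg_le C N d h -> deg_le C N d (fun x => a * g x + c * h x).
Proof. by move=> hg hh; apply: deg_le_add; apply: deg_le_scale. Qed.

Lemma deg_state {N T} (A : algorithm R N T) t b :
  deg_le C N t (fun x => state_upto A x t b).
Proof.
elim: t b => [|t IH] b /=; first exact: deg_le_const.
refine (@deg_le_ext _ _ _ (fun x => \sum_j gates A (inord t.+1) b j * state_upto A x t (oracle_map x j)) _ _ _).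
  move=> x; rewrite {1}/Defs.apply; apply: eq_bigr => j _; by rewrite apply_oracle.
apply: (@deg_le_sum _ _ _ _ (fun j x => gates A (inord t.+1) b j * state_upto A x t (oracle_map x j))) => j.
apply: deg_le_scale.
case: j => [[[i a] w] r].
pose phi x := state_upto A x t.
apply: (@deg_le_ext _ _ _ (fun x => (2^-1 * phi x (i, a, w, r) + 2^-1 * phi x (i, ~~ a, w, r)) + (2^-1 * phi x (i, a, w, r) + (- 2^-1) * phi x (i, ~~ a, w, r)) * chi C N (ei N i) x)).
  move=> x; rewrite /phi chiC chi_ei /oracle_map /bidx /bans /bwork /bres /=.
  case: (x i); rewrite ?expr0 ?expr1 /= ?Bool.xorb_true_r ?Bool.xorb_false_r.
    by field.
  by field.
eapply (@deg_le_add _ _ _ (fun x => 2^-1 * phi x (i, a, w, r) + 2^-1 * phi x (i, ~~ a, w, r))).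
  apply: (@deg_le_mono _ _ t); first exact: leqnSn.
  by apply: (@deg_le_lin t N (fun x => phi x (i,a,w,r)) (fun x => phi x (i, ~~a, w, r))); apply: IH.
apply: (@deg_le_mulchi _ _ _ (fun x => 2^-1 * phi x (i, a, w, r) + - 2^-1 * phi x (i, ~~ a, w, r))).
by apply: (@deg_le_lin t N (fun x => phi x (i,a,w,r)) (fun x => phi x (i, ~~a, w, r))); apply: IH.
Qed.


Lemma Re_form N (c : R) (G : input N -> input N -> R) (u : input N -> C) :
  complex.Re (RC c * \sum_x (u x)^* * \sum_y RC (G x y) * u y)
  = c * \sum_x \sum_y G x y * rip (u x) (u y).
Proof.
rewrite Re_RCM Re_sum; congr (_ * _); apply: eq_bigr => x _.
rewrite big_distrr Re_sum /=; apply: eq_bigr => y _.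
by rewrite mulrCA Re_RCM Re_conjM.
Qed.

Variables (N T : nat) (A : algorithm R N T).
Local Notation psi x := (final_state A x).
Definition chatD b s := fhat C N (fun x => psi x b) s.
Definition IPD x y := \sum_b rip (psi x b) (psi y b).
Definition QD k := \sum_b \sum_s sqnorm (chatD b s) * mu R N s ^+ k.

Lemma QK k : QD k = (2 ^+ N)^-1 * \sum_x \sum_y K R N k x y * IPD x y.
Proof.
have H : forall b, (2 ^+ N)^-1 * \sum_x (psi x b)^* * \sum_y K C N k x y * psi y b
   = \sum_s (chatD b s)^* * chatD b s * mu C N s ^+ k.
  move=> b; rewrite core; apply: eq_bigr => s _.
  by rewrite /chatD (fhat_morph _ _ (Num.Def.conjC : {rmorphism C -> C})).
have H2 : RC (QD k) = \sum_b (2 ^+ N)^-1 * \sum_x (psi x b)^* * \sum_y K C N k x y * psi y b.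
  rewrite /QD rmorph_sum; apply: eq_bigr => b _; rewrite H rmorph_sum; apply: eq_bigr => s _.
  by rewrite rmorphM sqnormC' rmorphXn mu_morph.
have := congr1 (@complex.Re R) H2; rewrite Re_RC => ->.
rewrite Re_sum.
under eq_bigr => b _.
  have -> : ((2 ^+ N)^-1 : C) = RC ((2 ^+ N)^-1) by rewrite fmorphV rmorphXn rmorph_nat.
  under eq_bigr => x _ do under eq_bigr => y _ do rewrite -(K_morph _ _ (real_complex R)).
  rewrite Re_form.
  over.
rewrite -big_distrr /=; congr (_ * _).
rewrite exchange_big /=; apply: eq_bigr => x _.
rewrite exchange_big /=; apply: eq_bigr => y _.
by rewrite /IPD big_distrr.
Qed.

End Quantum2.


Section Real.
Variable R : realType.

Lemma oddN k (x : R) : odd k -> (- x) ^+ k = - x ^+ k.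
Proof. by move=> hk; rewrite -mulN1r exprMn -signr_odd hk expr1 mulN1r. Qed.

Lemma odd_ltX k (a b : R) : odd k -> a < b -> a ^+ k < b ^+ k.
Proof.
move=> hk hab; have k0 : k != 0%N by case: k hk.
case: (lerP 0 a) => ha; first by rewrite ltrXn2r.
case: (lerP b 0) => hb.
  have : (- b) ^+ k < (- a) ^+ k by rewrite ltrXn2r ?oppr_ge0 ?ltrN2.
  by rewrite !oddN // ltrN2.
have h1 : 0 < (- a) ^+ k by rewrite exprn_gt0 // oppr_gt0.
have h2 : 0 < b ^+ k by rewrite exprn_gt0.
rewrite oddN // in h1; lra.
Qed.

Lemma odd_leX k (a b : R) : odd k -> a <= b -> a ^+ k <= b ^+ k.
Proof.
move=> hk; rewrite le_eqVlt => /orP [/eqP ->//|h].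
by rewrite le_eqVlt (@odd_ltX k _ _ hk h) orbT.
Qed.

Lemma realroot_pow k (V : R) : odd k -> (realroot k V) ^+ k = V.
Proof.
move=> hk; have k0 : (0 < k)%N by case: k hk.
rewrite /realroot exprMn.
have -> : (`|V| `^ (k%:R)^-1) ^+ k = `|V|.
  rewrite -powR_mulrn ?powR_ge0 // -powRrM mulVf ?powRr1 // pnatr_eq0 -lt0n //.
case: (eqVneq V 0) => [->|hV]; first by rewrite normr0 mulr0.
by rewrite sgr_odd // hk expr1 mulr_sg_norm.
Qed.

Lemma realroot_ge k (m V : R) : odd k -> m ^+ k <= V -> m <= realroot k V.
Proof.
move=> hk hV; rewrite leNgt; apply/negP => h.
have := @odd_ltX k _ _ hk h; rewrite realroot_pow //; lra.
Qed.

Lemma amgm (a : R) (u v : R[i]) : 0 < a ->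
  2 * rip R u v <= a * sqnorm R u + a^-1 * sqnorm R v.
Proof.
move=> ha; case: u => p1 p2; case: v => q1 q2; rewrite /rip /sqnorm /=.
rewrite -subr_ge0.
have -> : a * (p1 ^+ 2 + p2 ^+ 2) + a^-1 * (q1 ^+ 2 + q2 ^+ 2) - 2 * (p1 * q1 + p2 * q2)
  = a^-1 * ((a * p1 - q1) ^+ 2 + (a * p2 - q2) ^+ 2).
  by field; rewrite gt_eqF.
apply: mulr_ge0; [rewrite invr_ge0; exact: ltW | apply: addr_ge0; exact: sqr_ge0].
Qed.

Lemma sqrt_bound (eps X : R) : 0 <= eps ->
  (forall a, 0 < a -> X <= a + eps * a^-1) -> X <= 2 * Num.sqrt eps.
Proof.
move=> he h; case: (eqVneq eps 0) => [e0|en0].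
  rewrite e0 sqrtr0 mulr0 leNgt; apply/negP => hX.
  have := h (X / 2); rewrite e0 mul0r addr0 => /(_ ltac:(lra)); lra.
have hs : 0 < Num.sqrt eps by rewrite sqrtr_gt0 lt_neqAle eq_sym en0.
have := h _ hs.
have -> : eps * (Num.sqrt eps)^-1 = Num.sqrt eps.
  by rewrite -{1}(sqr_sqrtr he) expr2 -mulrA mulfV ?mulr1 // gt_eqF.
lra.
Qed.

End Real.


Section Main.
Variables (R : realType) (N T : nat) (A : algorithm R N T).
Local Notation C := R[i].
Local Notation psi x := (final_state A x).
Local Notation p := (prob_result A).
Local Notation Q := (QD R N T A).
Local Notation chat := (chatD R N T A).
Local Notation IP := (IPD R N T A).

Lemma sum_sq x : \sum_b sqnorm R (psi x b) = 1.
Proof.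
apply: (@complexI R); rewrite rmorph_sum rmorph1 /=.
under eq_bigr do rewrite sqnormC'.
exact: nrm_state.
Qed.

Lemma card_input : (#|input N|%:R : R) = 2 ^+ N.
Proof. by rewrite card_ffun card_bool card_ord natrX. Qed.

Lemma Q0 : Q 0 = 1.
Proof.
rewrite (QK R N T A) /=.
under eq_bigr do rewrite sum_deltaT /IPD.
under eq_bigr do under eq_bigr do rewrite rip_sq.
under eq_bigr do rewrite sum_sq.
by rewrite sumr_const card_input mulVf // expf_neq0 // pnatr_eq0.
Qed.

Lemma sqnorm_ge0 (z : C) : 0 <= sqnorm R z.
Proof. by rewrite /sqnorm addr_ge0 // sqr_ge0. Qed.

Lemma Q_lower k : odd k -> (0 < N)%N ->
  (1 - 2 * T%:R / N%:R) ^+ k <= Q k.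
Proof.
move=> hk hN.
rewrite -[X in X <= _]mulr1 -[X in _ ^+ k * X <= _]Q0 /QD big_distrr /=; apply: ler_sum => b _.
rewrite big_distrr /=; apply: ler_sum => s _.
rewrite expr0 mulr1 mulrC; case: (leqP (weight s) T) => hs.
  apply: ler_wpM2l; first exact: sqnorm_ge0.
  apply: odd_leX => //.
  by rewrite mu_weight // lerD2l lerN2 ler_pM2r ?invr_gt0 ?ltr0n // ler_pM2l // ler_nat.
have -> : chat b s = 0 by have := deg_state R A T b; rewrite /chatD => /(_ s hs).
by rewrite /sqnorm /= expr0n /= addr0 !mul0r.
Qed.


Lemma ripC (u v : C) : rip R u v = rip R v u.
Proof. by rewrite /rip mulrC [complex.Im u * _]mulrC. Qed.

Lemma sum_amgm a (P : pred (basis N (wsize R N T A))) (u v : basis N (wsize R N T A) -> C) :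
  0 < a ->
  2 * \sum_(b | P b) rip R (u b) (v b)
  <= a * \sum_(b | P b) sqnorm R (u b) + a^-1 * \sum_(b | P b) sqnorm R (v b).
Proof.
move=> ha; rewrite !mulr_sumr -big_split /=; apply: ler_sum => b _.
exact: amgm.
Qed.

Lemma prob_split x : p x true + p x false = 1.
Proof.
rewrite /prob_result -(sum_sq x) [RHS](bigID (fun b => bres b)) /=.
by congr (_ + _); apply: eq_bigl => b; case: (bres b).
Qed.

Lemma prob_ge0 x r : 0 <= p x r.
Proof. by apply: sumr_ge0 => b _; exact: sqnorm_ge0. Qed.

Lemma IP_split a x y r : 0 < a ->
  2 * IP x y <= a * (p x r + p y (~~ r)) + a^-1 * (p y r + p x (~~ r)).
Proof.
move=> ha.
rewrite /IPD (bigID (fun b => bres b == r)) /= mulrDr.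
have E : forall (F : basis N (wsize R N T A) -> R), \sum_(b | bres b != r) F b = \sum_(b | bres b == ~~ r) F b.
  by move=> F; apply: eq_bigl => b; case: (bres b); case: r.
rewrite E.
have h1 := sum_amgm _ (fun b => bres b == r) (fun b => psi x b) (fun b => psi y b) ha.
have h2 := sum_amgm _ (fun b => bres b == ~~ r) (fun b => psi y b) (fun b => psi x b) ha.
have h3 : \sum_(b | bres b == ~~ r) rip R (psi x b) (psi y b) = \sum_(b | bres b == ~~ r) rip R (psi y b) (psi x b).
  by apply: eq_bigr => b _; rewrite ripC.
rewrite /prob_result; lra.
Qed.

Lemma IP_le1 x y : IP x y <= 1.
Proof.
have := sum_amgm _ xpredT (fun b => psi x b) (fun b => psi y b) ltr01.
by rewrite !sum_sq invr1 /IPD; lra.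
Qed.

End Main.


Theorem theorem4 (R : realType) (N : nat) (f : input N -> R) (eps : R) (T : nat)
  (hN : (1 <= N)%N)
  (hf : forall x, f x = 1 \/ f x = -1)
  (A : algorithm R N T)
  (hA : computes_with_error A f eps) :
  forall k : nat, (0 < k)%N -> odd k ->
  (T%:R : R) >= 2^-1 * (1 - realroot k
      ((1 + 2 * Num.sqrt eps) / 2
       + (1 - 2 * Num.sqrt eps) / 2
         * \sum_(s : input N) fourier f s ^+ 2 * (1 - 2 * lambda s) ^+ k))
    * N%:R.
Proof.
move=> k k0 hk.
set se := Num.sqrt eps.
set p := prob_result A.
have hN1 : ((-1 : R) == 1) = false by apply/negbTE/eqP; lra.
have h1N : ((1 : R) == -1) = false by apply/negbTE/eqP; lra.
have hA' : forall x, 1 - eps <= p x (f x == -1).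
  move=> x; have := hA x; rewrite /p big_mkcond big_bool /=.
  by case: (hf x) => ->; rewrite ?hN1 ?h1N ?eqxx /= ?add0r ?addr0.
have psplit : forall x r, p x r + p x (~~ r) = 1.
  by move=> x [|]; rewrite /p /= ?prob_split // addrC prob_split.
have pge0 : forall x r, 0 <= p x r by move=> x r; apply: prob_ge0.
have he : 0 <= eps.
  have := hA' [ffun => false]; have := psplit [ffun => false] (f [ffun => false] == -1).
  have := pge0 [ffun => false] (~~ (f [ffun => false] == -1)); lra.
have key : forall x y r, 1 - eps <= p x r -> 1 - eps <= p y (~~ r) -> IPD R N T A x y <= 2 * se.
  move=> x y r h1 h2; apply: sqrt_bound => // a ha.
  have hs := IP_split R N T A a x y r ha.
  have s1 := psplit x r; have s2 := psplit y r.
  have g1 := pge0 x r; have g2 := pge0 y r; have g3 := pge0 x (~~ r); have g4 := pge0 y (~~ r).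
  have hia : 0 < a^-1 by rewrite invr_gt0.
  have t1 : a^-1 * (p y r + p x (~~ r)) <= a^-1 * (2 * eps).
    by apply: ler_wpM2l; [exact: ltW | lra].
  have t2 : a * (p x r + p y (~~ r)) <= a * 2.
    by apply: ler_wpM2l; [exact: ltW | lra].
  rewrite -/p in hs; lra.
set al := (1 + 2 * se) / 2.
set be := (1 - 2 * se) / 2.
have pw : forall x y, IPD R N T A x y <= al + be * (f x * f y).
  move=> x y; have hx := hA' x; have hy := hA' y.
  case: (hf x) => ex; case: (hf y) => ey; rewrite ex ey in hx hy *;
    rewrite ?h1N ?eqxx in hx hy.
  - have := IP_le1 R N T A x y; rewrite /al /be; lra.
  - have := key x y false hx hy; rewrite /al /be; lra.
  - have := key x y true hx hy; rewrite /al /be; lra.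
  - have := IP_le1 R N T A x y; rewrite /al /be; lra.
set S := \sum_(s : input N) fourier f s ^+ 2 * (1 - 2 * lambda s) ^+ k.
have hS : S = \sum_s fhat R N f s * fhat R N f s * mu R N s ^+ k.
  apply: eq_bigr => s _; rewrite mu_weight // /lambda mulrA expr2 //.
have upper : QD R N T A k <= al + be * S.
  rewrite (QK R N T A) hS -core.
  have E2 : (2 ^+ N : R) != 0 by rewrite expf_neq0 // pnatr_eq0.
  have -> : al + be * ((2 ^+ N)^-1 * \sum_x f x * \sum_y K R N k x y * f y)
     = (2 ^+ N)^-1 * \sum_x \sum_y K R N k x y * (al + be * (f x * f y)).
    have inner : forall x, \sum_y K R N k x y * (al + be * (f x * f y)) = al + be * (f x * \sum_y K R N k x y * f y).
      move=> x; rewrite (eq_bigr (fun y => al * K R N k x y + be * (f x * (K R N k x y * f y)))); last by move=> y _; ring.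
      by rewrite big_split /= -!mulr_sumr K_sum1 // mulr1.
    have cst : \sum_(x : input N) al = al * 2 ^+ N by rewrite sumr_const -card_input mulr_natr.
    rewrite (eq_bigr _ (fun x _ => inner x)) big_split /= cst -mulr_sumr.
    rewrite mulrDr; congr (_ + _); first by rewrite mulrCA mulVf ?mulr1.
    by rewrite mulrCA.
  apply: ler_wpM2l; first by rewrite invr_ge0 exprn_ge0.
  apply: ler_sum => x _; apply: ler_sum => y _.
  by apply: ler_wpM2l; [exact: K_ge0 | exact: pw].
have lower := Q_lower R N T A k hk hN.
have hm : 1 - 2 * T%:R / N%:R <= realroot k (al + be * S).
  by apply: realroot_ge => //; exact: le_trans lower upper.
set r := realroot k _ in hm *.
have hNp : (0 : R) < N%:R by rewrite ltr0n.
have h2 : (1 - r) * N%:R <= 2 * T%:R.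
  have -> : (2 * T%:R : R) = 2 * T%:R / N%:R * N%:R by rewrite mulfVK // gt_eqF.
  rewrite ler_pM2r //; lra.
lra.
Qed.
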